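(* In the isotropic setting below, fix $r>0$, $F,F_p\in\mathrm{GL}^+(3)$. Then the set-valued right-hand sides of the Simo–Miehe flow rule and of the Lion flow rule coincide: $$-2\,F^{-1}\big[\mathcal N_r(\tau_e)\,B_e\big]F^{-T}\;=\;-F_p^{-1}\,\mathcal N_r(\Sigma_e)\,F_p^{-T}.$$ Consequently, a differentiable curve $t\mapsto C_p(t)=F_p(t)^TF_p(t)$ (at fixed $F$) satisfies the Simo–Miehe flow rule $\frac{d}{dt}[C_p^{-1}]\in-2F^{-1}[\mathcal N_r(\tau_e)B_e]F^{-T}$ if and only if it satisfies the Lion flow rule $\frac{d}{dt}[C_p^{-1}]\in-F_p^{-1}\mathcal N_r(\Sigma_e)F_p^{-T}$.
   Context: $W:\mathrm{GL}^+(3)\to\mathbb{R}$ is $C^1$, objective and isotropic ($W(QFR)=W(F)$ for all $Q,R\in\mathrm{SO}(3)$). $F_e=FF_p^{-1}$, $C_p=F_p^TF_p$, $B_e=F_eF_e^T$, $\Sigma_e=F_e^TDW(F_e)$, $\tau_e=DW(F_e)F_e^T$ (symmetric for isotropic $W$). $\langle X,Y\rangle=\mathrm{tr}(XY^T)$, $\|\cdot\|$ Frobenius norm, $\mathrm{dev}_3X=X-\frac13\mathrm{tr}(X)\mathbb{1}$. For $r>0$ and symmetric $S$, $\mathcal N_r(S)$ is the subdifferential of the indicator function of the convex set $\{S\in\mathrm{Sym}(3):\|\mathrm{dev}_3S\|\le r\}$ evaluated as in the paper: $\mathcal N_r(S)=\{0\}$ if $\|\mathrm{dev}_3S\|<r$,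 $\mathcal N_r(S)=\{\lambda\,\mathrm{dev}_3S/\|\mathrm{dev}_3S\|:\lambda\ge0\}$ if $\|\mathrm{dev}_3S\|=r$, and $\mathcal N_r(S)=\emptyset$ if $\|\mathrm{dev}_3S\|>r$. For matrices $M,N$ and a set $\mathcal A$ of matrices, $M\mathcal AN=\{MXN:X\in\mathcal A\}$. *)

(* Defs.v *)
From Stdlib Require Import Reals.
Open Scope R_scope.

Inductive I3 : Type := i0 | i1 | i2.

Definition Mat := I3 -> I3 -> R.

Definition sum3 (f : I3 -> R) : R := f i0 + f i1 + f i2.

Definition nxt (i : I3) : I3 := match i with i0 => i1 | i1 => i2 | i2 => i0 end.

Definition mmul (A B : Mat) : Mat := fun i j => sum3 (fun k => A i k * B k j).
Definition mtr (A : Mat) : Mat := fun i j => A j i.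
Definition madd (A B : Mat) : Mat := fun i j => A i j + B i j.
Definition msub (A B : Mat) : Mat := fun i j => A i j - B i j.
Definition mscal (c : R) (A : Mat) : Mat := fun i j => c * A i j.
Definition mzero : Mat := fun _ _ => 0.
Definition mid : Mat := fun i j => match i, j with
  | i0, i0 | i1, i1 | i2, i2 => 1 | _, _ => 0 end.

(* cofactor of a 3x3 matrix (cyclic index form gives the signs) *)
Definition cof (A : Mat) (i j : I3) : R :=
  A (nxt i) (nxt j) * A (nxt (nxt i)) (nxt (nxt j))
  - A (nxt i) (nxt (nxt j)) * A (nxt (nxt i)) (nxt j).
Definition det (A : Mat) : R := sum3 (fun j => A i0 j * cof A i0 j).
(* inverse (adjugate / determinant), meaningful when det A <> 0 *)
Definition minv (A : Mat) : Mat := fun i j => cof A j i / det A.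
Definition trace (A : Mat) : R := sum3 (fun i => A i i).

Definition inner (X Y : Mat) : R := sum3 (fun i => sum3 (fun j => X i j * Y i j)).
Definition fnorm (X : Mat) : R := sqrt (inner X X).
Definition dev3 (X : Mat) : Mat := msub X (mscal (trace X / 3) mid).

Definition GLplus (A : Mat) : Prop := 0 < det A.
Definition SO3 (Q : Mat) : Prop := mmul (mtr Q) Q = mid /\ det Q = 1.

Definition frechet_at (W : Mat -> R) (DW : Mat -> Mat) (F : Mat) : Prop :=
  forall eps, 0 < eps -> exists delta, 0 < delta /\
    forall H, fnorm H < delta ->
      Rabs (W (madd F H) - W F - inner (DW F) H) <= eps * fnorm H.
Definition C1_GLplus (W : Mat -> R) (DW : Mat -> Mat) : Prop :=
  (forall F, GLplus F -> frechet_at W DW F) /\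
  (forall F, GLplus F -> forall eps, 0 < eps -> exists delta, 0 < delta /\
     forall G, fnorm (msub G F) < delta -> fnorm (msub (DW G) (DW F)) < eps).
Definition obj_iso (W : Mat -> R) : Prop :=
  forall Q R F, SO3 Q -> SO3 R -> GLplus F -> W (mmul (mmul Q F) R) = W F.

Definition Fe (F Fp : Mat) : Mat := mmul F (minv Fp).
Definition Cp (Fp : Mat) : Mat := mmul (mtr Fp) Fp.
Definition Be (Fe : Mat) : Mat := mmul Fe (mtr Fe).
Definition Sigma_e (DW : Mat -> Mat) (Fe : Mat) : Mat := mmul (mtr Fe) (DW Fe).
Definition tau_e (DW : Mat -> Mat) (Fe : Mat) : Mat := mmul (DW Fe) (mtr Fe).

Definition Nr (r : R) (S : Mat) (X : Mat) : Prop :=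
  (fnorm (dev3 S) < r /\ X = mzero) \/
  (fnorm (dev3 S) = r /\ exists lam, 0 <= lam /\
      X = mscal (lam / fnorm (dev3 S)) (dev3 S)).

Definition SM_rhs (r : R) (DW : Mat -> Mat) (F Fp : Mat) (Z : Mat) : Prop :=
  exists X, Nr r (tau_e DW (Fe F Fp)) X /\
    Z = mscal (-2) (mmul (mmul (minv F) (mmul X (Be (Fe F Fp)))) (mtr (minv F))).

Definition Lion_rhs (r : R) (DW : Mat -> Mat) (F Fp : Mat) (Z : Mat) : Prop :=
  exists Y, Nr r (Sigma_e DW (Fe F Fp)) Y /\
    Z = mscal (-1) (mmul (mmul (minv Fp) Y) (mtr (minv Fp))).

(* Main.v *)
Require Import Defs.
From Stdlib Require Import Reals Lra Psatz FunctionalExtensionality.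
Open Scope R_scope.

Ltac mext := let i := fresh "i" in let j := fresh "j" in
  apply functional_extensionality; intro i; apply functional_extensionality; intro j;
  destruct i, j.
Ltac munf := unfold dev3, trace, inner, mmul, mtr, madd, msub, mscal, mzero, mid, sum3 in *; simpl.

Lemma mmul_assoc A B C : mmul (mmul A B) C = mmul A (mmul B C).
Proof. mext; munf; ring. Qed.
Lemma mtr_mmul A B : mtr (mmul A B) = mmul (mtr B) (mtr A).
Proof. mext; munf; ring. Qed.
Lemma mtr_mid : mtr mid = mid.
Proof. mext; munf; ring. Qed.
Lemma mmul_mid_l A : mmul mid A = A.
Proof. mext; munf; ring. Qed.
Lemma mmul_mid_r A : mmul A mid = A.
Proof. mext; munf; ring. Qed.
Lemma mmul_scal_l c A B : mmul (mscal c A) B = mscal c (mmul A B).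
Proof. mext; munf; ring. Qed.
Lemma mmul_scal_r c A B : mmul A (mscal c B) = mscal c (mmul A B).
Proof. mext; munf; ring. Qed.
Lemma mmul_sub_l A B C : mmul (msub A B) C = msub (mmul A C) (mmul B C).
Proof. mext; munf; ring. Qed.
Lemma mmul_sub_r A B C : mmul C (msub A B) = msub (mmul C A) (mmul C B).
Proof. mext; munf; ring. Qed.
Lemma mmul_zero_l A : mmul mzero A = mzero.
Proof. mext; munf; ring. Qed.
Lemma mmul_zero_r A : mmul A mzero = mzero.
Proof. mext; munf; ring. Qed.
Lemma mscal_zero c : mscal c mzero = mzero.
Proof. mext; munf; ring. Qed.
Lemma mscal_mscal a b A : mscal a (mscal b A) = mscal (a*b) A.
Proof. mext; munf; ring. Qed.
Lemma trace_comm A B : trace (mmul A B) = trace (mmul B A).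
Proof. unfold trace, inner, mmul, mtr, sum3; ring. Qed.
Lemma inner_trace A B : inner A B = trace (mmul A (mtr B)).
Proof. unfold trace, inner, mmul, mtr, sum3; ring. Qed.
Lemma mtr_dev A : mtr (dev3 A) = dev3 (mtr A).
Proof. mext; munf; ring. Qed.

Lemma minv_l A : det A <> 0 -> mmul (minv A) A = mid.
Proof. intro H. mext; unfold mmul, minv, det, cof, sum3, mid in *; simpl in *; field; exact H. Qed.
Lemma minv_r A : det A <> 0 -> mmul A (minv A) = mid.
Proof. intro H. mext; unfold mmul, minv, det, cof, sum3, mid in *; simpl in *; field; exact H. Qed.
Lemma det_mmul A B : det (mmul A B) = det A * det B.
Proof. unfold det, cof, mmul, sum3; simpl; ring. Qed.
Lemma det_mid : det mid = 1.
Proof. unfold det, cof, mid, sum3; simpl; ring. Qed.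
Lemma mtr_mtr A : mtr (mtr A) = A.
Proof. mext; munf; ring. Qed.

Lemma minv_unique M A : det A <> 0 -> mmul M A = mid -> M = minv A.
Proof.
  intros H HM. rewrite <- (mmul_mid_r M), <- (minv_r A H), <- mmul_assoc, HM.
  apply mmul_mid_l.
Qed.

Lemma det_minv A : det A <> 0 -> det (minv A) * det A = 1.
Proof. intro H. rewrite <- det_mmul, minv_l by exact H. apply det_mid. Qed.

Lemma SM_form P Gi G X : mmul Gi G = mid ->
  mscal (-2) (mmul (mmul (mmul P Gi) (mmul X (mmul G (mtr G)))) (mtr (mmul P Gi))) =
  mscal (-1) (mmul (mmul P (mscal 2 (mmul (mmul Gi X) G))) (mtr P)).
Proof.
  intro H.
  transitivity (mscal (-2) (mmul (mmul (mmul P (mmul (mmul Gi X) G)) (mtr (mmul Gi G))) (mtr P))).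
  { mext; munf; ring. }
  rewrite H, mtr_mid, mmul_mid_r. mext; munf; ring.
Qed.

Lemma K1 D G : det G <> 0 -> mtr (mmul D (mtr G)) = mmul D (mtr G) ->
  mtr (mmul (mtr G) D) = mmul (mtr G) D ->
  mmul (mmul (minv G) (dev3 (mmul D (mtr G)))) G = dev3 (mmul (mtr G) D).
Proof.
  intros HG H1 H2.
  assert (E: mmul (mmul (minv G) (mmul D (mtr G))) G = mmul (mtr G) D).
  { assert (E1: mmul D (mtr G) = mmul G (mtr D)).
    { rewrite <- H1, mtr_mmul, mtr_mtr. reflexivity. }
    rewrite E1.
    transitivity (mmul (mmul (minv G) G) (mmul (mtr D) G)).
    { mext; munf; ring. }
    rewrite minv_l by exact HG. rewrite mmul_mid_l.
    rewrite <- H2, mtr_mmul, mtr_mtr. reflexivity. }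
  unfold dev3. rewrite mmul_sub_r, mmul_sub_l, E, mmul_scal_r, mmul_scal_l,
    mmul_mid_r, minv_l by exact HG.
  replace (trace (mmul D (mtr G))) with (trace (mmul (mtr G) D)) by (munf; ring).
  reflexivity.
Qed.

Lemma K2 D G : det G <> 0 -> mtr (mmul D (mtr G)) = mmul D (mtr G) ->
  mtr (mmul (mtr G) D) = mmul (mtr G) D ->
  fnorm (dev3 (mmul D (mtr G))) = fnorm (dev3 (mmul (mtr G) D)).
Proof.
  intros HG H1 H2. unfold fnorm. f_equal.
  rewrite <- (K1 D G HG H1 H2).
  assert (HS: mtr (dev3 (mmul (mtr G) D)) = dev3 (mmul (mtr G) D)).
  { rewrite mtr_dev, H2. reflexivity. }
  rewrite <- (K1 D G HG H1 H2) in HS.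
  assert (HM: mtr (dev3 (mmul D (mtr G))) = dev3 (mmul D (mtr G))).
  { rewrite mtr_dev, H1. reflexivity. }
  set (M := dev3 (mmul D (mtr G))) in *.
  rewrite !inner_trace, HS, HM.
  transitivity (trace (mmul (mmul G (minv G)) (mmul M (mmul (mmul G (minv G)) M)))).
  { rewrite minv_r by exact HG. rewrite !mmul_mid_l. reflexivity. }
  munf; ring.
Qed.
Lemma inner_nonneg M : 0 <= inner M M.
Proof. unfold inner, sum3. nra. Qed.

Lemma fnorm_scal c M : fnorm (mscal c M) = Rabs c * fnorm M.
Proof.
  unfold fnorm. replace (inner (mscal c M) (mscal c M)) with ((c*c) * inner M M) by (munf; ring).
  rewrite sqrt_mult_alt by nra. f_equal. rewrite <- (sqrt_Rsqr_abs c). reflexivity.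
Qed.

Lemma deriv_zero (W : Mat -> R) DW F N P : frechet_at W DW F ->
  (forall s, 0 < s < 1 -> W (madd F (mscal (2*s/(1+s*s)) (msub N (mscal s P)))) = W F) ->
  inner (DW F) N = 0.
Proof.
  intros Hfr Hinv.
  set (x := inner (DW F) N). set (y := inner (DW F) P).
  destruct (Req_dec x 0) as [|Hx]; [assumption|exfalso].
  set (a := inner N N). set (b := inner N P). set (p := inner P P).
  assert (Ha : 0 <= a) by apply inner_nonneg.
  assert (Hp : 0 <= p) by apply inner_nonneg.
  set (B := a + 2 * Rabs b + p + 1).
  assert (HB : 1 <= B) by (unfold B; pose proof (Rabs_pos b); lra).
  assert (Hbound : forall s, 0 < s < 1 -> fnorm (msub N (mscal s P)) <= B).
  { intros s hs. unfold fnorm.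
    replace (inner (msub N (mscal s P)) (msub N (mscal s P))) with (a - 2*s*b + s*s*p)
      by (unfold a, b, p; munf; ring).
    rewrite <- (sqrt_square B) by lra. apply sqrt_le_1_alt.
    pose proof (Rle_abs b). pose proof (Rle_abs (-b)). rewrite Rabs_Ropp in *.
    assert (s*s <= 1) by nra.
    assert (0 <= (1 - s*s) * p) by (apply Rmult_le_pos; lra).
    assert (0 <= s * (Rabs b + b)) by (apply Rmult_le_pos; lra).
    assert (0 <= (1 - s) * Rabs b) by (apply Rmult_le_pos; lra).
    unfold B in *; nra. }
  assert (Hxp : 0 < Rabs x) by (apply Rabs_pos_lt; exact Hx).
  set (eps := Rabs x / (4*B)).
  assert (Heps : 0 < eps) by (unfold eps; apply Rdiv_lt_0_compat; lra).
  destruct (Hfr eps Heps) as [delta [Hd Hfd]].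
  pose proof (Rabs_pos y) as Hy.
  set (s := Rmin (1/2) (Rmin (delta/(4*B)) (Rabs x/(4*(Rabs y+1))))).
  assert (Hs1 : s <= 1/2) by apply Rmin_l.
  assert (Hs2 : s <= delta/(4*B)) by (eapply Rle_trans; [apply Rmin_r|apply Rmin_l]).
  assert (Hs3 : s <= Rabs x/(4*(Rabs y+1))) by (eapply Rle_trans; [apply Rmin_r|apply Rmin_r]).
  assert (Hs0 : 0 < s).
  { unfold s. repeat apply Rmin_pos; try lra; apply Rdiv_lt_0_compat; lra. }
  assert (hs : 0 < s < 1) by lra.
  set (c := 2*s/(1+s*s)).
  assert (Hc0 : 0 < c) by (unfold c; apply Rdiv_lt_0_compat; nra).
  assert (Hc1 : c <= 2*s).
  { unfold c. apply (Rmult_le_reg_r (1+s*s)); [nra|].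
    unfold Rdiv; rewrite Rmult_assoc, Rinv_l by nra. nra. }
  set (H := mscal c (msub N (mscal s P))).
  assert (HfnH : fnorm H <= c * B).
  { unfold H. rewrite fnorm_scal, Rabs_pos_eq by lra.
    apply Rmult_le_compat_l; [lra|]. apply Hbound; exact hs. }
  assert (HdB : 2 * s * B <= delta / 2).
  { apply (Rmult_le_compat_r (4*B)) in Hs2; [|lra].
    unfold Rdiv in Hs2. rewrite Rmult_assoc, Rinv_l in Hs2 by lra. lra. }
  assert (HHd : fnorm H < delta) by nra.
  specialize (Hfd H HHd). rewrite (Hinv s hs : W (madd F H) = W F) in Hfd.
  replace (inner (DW F) H) with (c * (x - s*y)) in Hfd by (unfold H, x, y; munf; ring).
  replace (W F - W F - c * (x - s * y)) with (- (c * (x - s*y))) in Hfd by ring.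
  rewrite Rabs_Ropp, Rabs_mult, (Rabs_pos_eq c) in Hfd by lra.
  assert (H1 : Rabs (x - s*y) <= eps * B).
  { apply (Rmult_le_reg_l c); [lra|].
    apply Rle_trans with (eps * fnorm H); [exact Hfd|].
    assert (0 <= fnorm H) by (unfold fnorm; apply sqrt_pos). nra. }
  assert (HeB : eps * B = Rabs x / 4).
  { unfold eps. field. lra. }
  assert (H2 : Rabs (s*y) <= Rabs x / 4).
  { rewrite Rabs_mult, (Rabs_pos_eq s) by lra.
    apply (Rmult_le_compat_r (4*(Rabs y+1))) in Hs3; [|lra].
    unfold Rdiv in Hs3. rewrite Rmult_assoc, Rinv_l in Hs3 by lra. nra. }
  pose proof (Rabs_triang (x - s*y) (s*y)) as Ht.
  replace (x - s*y + s*y) with x in Ht by ring. lra.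
Qed.
Definition Qm (A P : Mat) (s : R) : Mat := madd mid (mscal (2*s/(1+s*s)) (msub A (mscal s P))).
Definition A01 : Mat := fun i j => match i, j with i1, i0 => 1 | i0, i1 => -1 | _, _ => 0 end.
Definition P01 : Mat := fun i j => match i, j with i0, i0 => 1 | i1, i1 => 1 | _, _ => 0 end.
Definition A12 : Mat := fun i j => match i, j with i2, i1 => 1 | i1, i2 => -1 | _, _ => 0 end.
Definition P12 : Mat := fun i j => match i, j with i1, i1 => 1 | i2, i2 => 1 | _, _ => 0 end.
Definition A20 : Mat := fun i j => match i, j with i0, i2 => 1 | i2, i0 => -1 | _, _ => 0 end.
Definition P20 : Mat := fun i j => match i, j with i2, i2 => 1 | i0, i0 => 1 | _, _ => 0 end.

Ltac so3 := intros s hs; assert (1 + s*s <> 0) by nra; split;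
  [ mext; unfold Qm, A01, P01, A12, P12, A20, P20; munf; field; assumption
  | unfold det, cof, Qm, A01, P01, A12, P12, A20, P20; munf; field; assumption ].

Lemma so3_01 : forall s, 0 < s < 1 -> SO3 (Qm A01 P01 s). Proof. so3. Qed.
Lemma so3_12 : forall s, 0 < s < 1 -> SO3 (Qm A12 P12 s). Proof. so3. Qed.
Lemma so3_20 : forall s, 0 < s < 1 -> SO3 (Qm A20 P20 s). Proof. so3. Qed.

Lemma SO3_mid : SO3 mid.
Proof. split; [rewrite mtr_mid, mmul_mid_l; reflexivity | apply det_mid]. Qed.

Lemma left_zero (W : Mat -> R) DW G A P : frechet_at W DW G -> obj_iso W -> GLplus G ->
  (forall s, 0 < s < 1 -> SO3 (Qm A P s)) -> inner (DW G) (mmul A G) = 0.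
Proof.
  intros Hf Hiso HG HQ. apply (deriv_zero W DW G (mmul A G) (mmul P G)); [exact Hf|].
  intros s hs. transitivity (W (mmul (mmul (Qm A P s) G) mid)).
  { f_equal. mext; unfold Qm; munf; ring. }
  apply Hiso; auto. apply SO3_mid.
Qed.

Lemma right_zero (W : Mat -> R) DW G A P : frechet_at W DW G -> obj_iso W -> GLplus G ->
  (forall s, 0 < s < 1 -> SO3 (Qm A P s)) -> inner (DW G) (mmul G A) = 0.
Proof.
  intros Hf Hiso HG HQ. apply (deriv_zero W DW G (mmul G A) (mmul G P)); [exact Hf|].
  intros s hs. transitivity (W (mmul (mmul mid G) (Qm A P s))).
  { f_equal. mext; unfold Qm; munf; ring. }
  apply Hiso; auto. apply SO3_mid.
Qed.

Lemma sym_lemma (W : Mat -> R) DW G : C1_GLplus W DW -> obj_iso W -> GLplus G ->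
  mtr (mmul (DW G) (mtr G)) = mmul (DW G) (mtr G) /\
  mtr (mmul (mtr G) (DW G)) = mmul (mtr G) (DW G).
Proof.
  intros [Hf _] Hiso HG. specialize (Hf G HG).
  pose proof (left_zero W DW G A01 P01 Hf Hiso HG so3_01) as L1.
  pose proof (left_zero W DW G A12 P12 Hf Hiso HG so3_12) as L2.
  pose proof (left_zero W DW G A20 P20 Hf Hiso HG so3_20) as L3.
  pose proof (right_zero W DW G A01 P01 Hf Hiso HG so3_01) as R1.
  pose proof (right_zero W DW G A12 P12 Hf Hiso HG so3_12) as R2.
  pose proof (right_zero W DW G A20 P20 Hf Hiso HG so3_20) as R3.
  unfold A01, A12, A20 in *. munf.
  split; mext; simpl; lra.
Qed.

Lemma Nr_fwd r D G X : det G <> 0 -> mtr (mmul D (mtr G)) = mmul D (mtr G) ->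
  mtr (mmul (mtr G) D) = mmul (mtr G) D ->
  Nr r (mmul D (mtr G)) X -> Nr r (mmul (mtr G) D) (mscal 2 (mmul (mmul (minv G) X) G)).
Proof.
  intros HG H1 H2 [[Hn HX]|[Hn [lam [Hl HX]]]]; subst X.
  - left. split. rewrite <- (K2 D G HG H1 H2); exact Hn.
    rewrite mmul_zero_r, mmul_zero_l, mscal_zero. reflexivity.
  - right. split. rewrite <- (K2 D G HG H1 H2); exact Hn.
    exists (2*lam). split. lra.
    rewrite mmul_scal_r, mmul_scal_l, (K1 D G HG H1 H2), mscal_mscal, <- (K2 D G HG H1 H2).
    f_equal. unfold Rdiv; ring.
Qed.

Lemma Nr_bwd r D G Y : 0 < r -> det G <> 0 -> mtr (mmul D (mtr G)) = mmul D (mtr G) ->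
  mtr (mmul (mtr G) D) = mmul (mtr G) D ->
  Nr r (mmul (mtr G) D) Y -> exists X, Nr r (mmul D (mtr G)) X /\
    Y = mscal 2 (mmul (mmul (minv G) X) G).
Proof.
  intros hr HG H1 H2 [[Hn HY]|[Hn [lam [Hl HY]]]]; subst Y.
  - exists mzero. split. left. split; [rewrite (K2 D G HG H1 H2); exact Hn|reflexivity].
    rewrite mmul_zero_r, mmul_zero_l, mscal_zero. reflexivity.
  - exists (mscal ((lam/2) / fnorm (dev3 (mmul D (mtr G)))) (dev3 (mmul D (mtr G)))).
    split.
    + right. split. rewrite (K2 D G HG H1 H2); exact Hn. exists (lam/2). split; [lra|reflexivity].
    + rewrite mmul_scal_r, mmul_scal_l, (K1 D G HG H1 H2), mscal_mscal, <- (K2 D G HG H1 H2).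
      rewrite (K2 D G HG H1 H2), Hn. f_equal. field. lra.
Qed.

Lemma part1 (W : Mat -> R) DW r : C1_GLplus W DW -> obj_iso W -> 0 < r ->
  forall F Fp : Mat, GLplus F -> GLplus Fp ->
     forall Z, SM_rhs r DW F Fp Z <-> Lion_rhs r DW F Fp Z.
Proof.
  intros HW Hiso hr F Fp HF HFp Z.
  unfold GLplus in *.
  assert (hFp : det Fp <> 0) by lra.
  assert (hF : det F <> 0) by lra.
  pose proof (det_minv Fp hFp) as Hdi.
  assert (HGp : GLplus (Fe F Fp)).
  { unfold GLplus, Fe. rewrite det_mmul. assert (0 < det (minv Fp)) by nra. nra. }
  destruct (sym_lemma W DW (Fe F Fp) HW Hiso HGp) as [H1 H2].
  unfold SM_rhs, Lion_rhs, tau_e, Sigma_e, Be in *.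
  set (G := Fe F Fp) in *.
  assert (hG : det G <> 0) by (unfold GLplus in HGp; lra).
  assert (hFG : mmul G Fp = F).
  { unfold G, Fe. rewrite mmul_assoc, minv_l, mmul_mid_r by exact hFp. reflexivity. }
  assert (hinvF : minv F = mmul (minv Fp) (minv G)).
  { symmetry. apply minv_unique; [exact hF|]. rewrite <- hFG at 1.
    rewrite !mmul_assoc, <- (mmul_assoc (minv G) G Fp), minv_l, mmul_mid_l, minv_l
      by assumption. reflexivity. }
  set (D := DW G) in *.
  split.
  - intros [X [HX HZ]]. exists (mscal 2 (mmul (mmul (minv G) X) G)). split.
    + apply Nr_fwd; assumption.
    + rewrite HZ, hinvF. apply SM_form. apply minv_l; exact hG.
  - intros [Y [HY HZ]]. destruct (Nr_bwd r D G Y hr hG H1 H2 HY) as [X [HX HYX]].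
    exists X. split; [exact HX|]. rewrite HZ, HYX, hinvF. symmetry. apply SM_form.
    apply minv_l; exact hG.
Qed.

Theorem mainTheorem6 (W : Mat -> R) (DW : Mat -> Mat)
  (HW : C1_GLplus W DW) (Hiso : obj_iso W) (r : R) (hr : 0 < r) :
  (forall F Fp : Mat, GLplus F -> GLplus Fp ->
     forall Z, SM_rhs r DW F Fp Z <-> Lion_rhs r DW F Fp Z) /\
  (forall (F : Mat) (Fpt : R -> Mat) (Cdot : R -> Mat) (a b : R),
     GLplus F ->
     (forall t, a < t < b -> GLplus (Fpt t)) ->
     (forall t, a < t < b -> forall i j,
        derivable_pt_lim (fun s => minv (Cp (Fpt s)) i j) t (Cdot t i j)) ->
     ((forall t, a < t < b -> SM_rhs r DW F (Fpt t) (Cdot t)) <->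
      (forall t, a < t < b -> Lion_rhs r DW F (Fpt t) (Cdot t)))).
Proof.
  split.
  - apply (part1 W DW r); assumption.
  - intros F Fpt Cdot a b HF HFp _. split; intros H t ht.
    + apply (part1 W DW r HW Hiso hr F (Fpt t) HF (HFp t ht)). apply H; exact ht.
    + apply (part1 W DW r HW Hiso hr F (Fpt t) HF (HFp t ht)). apply H; exact ht.
Qed.
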